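(* Let $n\ge 2$ and let $F$ be the free loop on $n$ generators $x_1,\dots,x_n$. Then $\gamma_{n-1}\mathrm{LMlt}(F/F_3)$ is non-trivial.
   Context: A loop is a set with a product and two-sided identity in which all left and right multiplications are bijective; $\mathrm{LMlt}(L)$ is the group of permutations of $L$ generated by the left multiplications $L_a\colon x\mapsto ax$. For a group $G$, $\gamma_1G=G$ and $\gamma_{k+1}G=[G,\gamma_kG]$. For a loop $F$ and a normal subloop $N$, $[N,F]$ denotes the smallest subloop of $N$ which is normal in $F$ and such that $N/[N,F]$ is contained in the centre of $F/[N,F]$. Bruck's lower central series is $F_1=F$, $F_{k+1}=[F_k,F]$. *)

(* Defs.v *)
From mathcomp Require Import all_boot.
Set Implicit Arguments.
Unset Strict Implicit.
Unset Printing Implicit Defensive.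

Record loop := Loop {
  lcar :> Type;
  lmul : lcar -> lcar -> lcar;
  lone : lcar;
  lone_l : forall x, lmul lone x = x;
  lone_r : forall x, lmul x lone = x;
  lmul_bij_l : forall a, bijective (lmul a);
  lmul_bij_r : forall a, bijective (fun x => lmul x a)
}.

Section LoopDefs.
Variable L : loop.
Local Notation "x * y" := (lmul x y).
Local Notation "1" := (lone L).

Definition loop_hom (K : loop) (h : L -> K) : Prop :=
  forall a b, h (a * b) = lmul (h a) (h b).

Definition subloop (N : L -> Prop) : Prop :=
  [/\ N 1,
      (forall a b, N a -> N b -> N (a * b)),
      (forall a b x, N a -> N b -> a * x = b -> N x) &
      (forall a b y, N a -> N b -> y * a = b -> N y)].

(* normal subloop (Bruck): xN = Nx, (xN)y = x(Ny), x(yN) = (xy)N *)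
Definition normal_subloop (N : L -> Prop) : Prop :=
  subloop N /\
  forall x y z,
    [/\ (exists m, N m /\ z = x * m) <-> (exists m, N m /\ z = m * x),
        (exists m, N m /\ z = (x * m) * y) <-> (exists m, N m /\ z = x * (m * y)) &
        (exists m, N m /\ z = x * (y * m)) <-> (exists m, N m /\ z = (x * y) * m)].

Definition coset (M : L -> Prop) (x : L) : L -> Prop :=
  fun y => exists m, M m /\ y = m * x.

Definition eqmod (M : L -> Prop) (x y : L) : Prop := coset M x = coset M y.

(* N/M is contained in the centre Z(L/M): every class aM with a in N
   commutes and associates with all classes of L/M *)
Definition central_mod (M N : L -> Prop) : Prop :=
  forall a x y, N a ->
    [/\ eqmod M (a * x) (x * a),
        eqmod M ((a * x) * y) (a * (x * y)),
        eqmod M ((x * a) * y) (x * (a * y)) &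
        eqmod M ((x * y) * a) (x * (y * a))].

(* [N, L]: the smallest subloop of N, normal in L, with N/[N,L] central
   in L/[N,L] (the intersection of all such) *)
Definition loop_comm (N : L -> Prop) : L -> Prop :=
  fun z => forall M, normal_subloop M -> (forall y, M y -> N y) ->
                     central_mod M N -> M z.

Fixpoint bruck (k : nat) : L -> Prop :=
  match k with
  | 0 | 1 => fun _ => True
  | S k' => loop_comm (bruck k')
  end.

Definition quot (M : L -> Prop) : Type := {P : L -> Prop | exists x, P = coset M x}.
Definition qproj (M : L -> Prop) (x : L) : quot M :=
  exist _ (coset M x) (ex_intro _ x erefl).

Definition quot_lmult (M : L -> Prop) : (quot M -> quot M) -> Prop :=
  fun f => exists a, forall x, f (qproj M x) = qproj M (a * x).

End LoopDefs.

Section PermGroups.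
Variable X : Type.

Inductive gen (A : (X -> X) -> Prop) : (X -> X) -> Prop :=
| gen_base f : A f -> gen A f
| gen_id : gen A id
| gen_comp f g : gen A f -> gen A g -> gen A (f \o g)
| gen_inv f g : gen A f -> cancel f g -> cancel g f -> gen A g.

Definition commset (G H : (X -> X) -> Prop) : (X -> X) -> Prop :=
  fun c => exists g h gi hi, G g /\ H h /\ cancel g gi /\ cancel gi g /\
                                  cancel h hi /\ cancel hi h /\
                                  c = gi \o hi \o g \o h.

Fixpoint gamma (G : (X -> X) -> Prop) (k : nat) : (X -> X) -> Prop :=
  match k with
  | 0 | 1 => G
  | S k' => gen (commset G (gamma G k'))
  end.

End PermGroups.

Definition LMlt_quot (L : loop) (M : L -> Prop) : (@quot L M -> @quot L M) -> Prop :=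
  gen (@quot_lmult L M).

Definition free_loop_on (n : nat) (F : loop) (x : 'I_n -> F) : Prop :=
  forall (L : loop) (f : 'I_n -> L),
    exists h : F -> L, [/\ loop_hom h, (forall i, h (x i) = f i) &
      forall h' : F -> L, loop_hom h' -> (forall i, h' (x i) = f i) -> h' = h].

(* Main.v *)
Require Import Defs.
From mathcomp Require Import all_boot.
From Stdlib Require Import FunctionalExtensionality PropExtensionality ProofIrrelevance IndefiniteDescription.
Set Implicit Arguments.
Unset Strict Implicit.
Unset Printing Implicit Defensive.

Lemma mulIl (L : loop) (a : L) : injective (lmul a).
Proof. exact: bij_inj (lmul_bij_l a). Qed.
Lemma mulIr (L : loop) (a : L) : injective (fun x => lmul x a).
Proof. exact: bij_inj (lmul_bij_r a). Qed.
Lemma surjl (L : loop) (a z : L) : exists y, lmul a y = z.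
Proof. case: (lmul_bij_l a) => g _ H; exists (g z); exact: H. Qed.
Lemma surjr (L : loop) (a z : L) : exists y, lmul y a = z.
Proof. case: (lmul_bij_r a) => g _ H; exists (g z); exact: H. Qed.

Section LoopTheory.
Variable L : loop.
Local Notation "x * y" := (lmul x y).
Local Notation "1" := (lone L).

Lemma bij_surj (u : L -> L) : bijective u -> forall z, exists y, u y = z.
Proof. case=> g _ H z; exists (g z); exact: H. Qed.

Section Normal.
Variable N : L -> Prop.
Hypothesis HN : normal_subloop N.

Lemma nP1 x z : (exists m, N m /\ z = x * m) <-> (exists m, N m /\ z = m * x).
Proof. by case: HN => _ H; case: (H x x z). Qed.
Lemma nP2 x y z : (exists m, N m /\ z = (x * m) * y) <-> (exists m, N m /\ z = x * (m * y)).
Proof. by case: HN => _ H; case: (H x y z). Qed.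
Lemma nP3 x y z : (exists m, N m /\ z = x * (y * m)) <-> (exists m, N m /\ z = (x * y) * m).
Proof. by case: HN => _ H; case: (H x y z). Qed.
Lemma nS1 : N 1. Proof. by case: HN => -[]. Qed.
Lemma nSM a b : N a -> N b -> N (a * b). Proof. case: HN => -[] _ H _ _ _; exact: H. Qed.
Lemma nSdl a b y : N a -> N b -> a * y = b -> N y. Proof. by case: HN => -[] _ _ H _ _; apply: H. Qed.

Lemma lemS n v z : N n -> (exists m, N m /\ z = m * (n * v)) -> exists m, N m /\ z = m * v.
Proof.
move=> Hn [m [Hm ->]].
have [n1 [Hn1 E1]] : exists n1, N n1 /\ n * v = v * n1 by apply/nP1; exists n.
rewrite E1.
have [n2 [Hn2 E2]] : exists n2, N n2 /\ m * (v * n1) = (m * v) * n2 by apply/nP3; exists n1.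
rewrite E2.
have [n3 [Hn3 E3]] : exists n3, N n3 /\ m * v = v * n3 by apply/nP1; exists m.
rewrite E3.
have [n4 [Hn4 E4]] : exists n4, N n4 /\ (v * n3) * n2 = v * (n4 * n2) by apply/nP2; exists n3.
rewrite E4; apply/nP1; exists (n4 * n2); split => //; exact: nSM.
Qed.

Lemma lemT n v : N n -> exists n0, N n0 /\ v = n0 * (n * v).
Proof.
move=> Hn.
have [n1 [Hn1 E1]] : exists n1, N n1 /\ n * v = v * n1 by apply/nP1; exists n.
have [m1 Em1] := surjl n1 1.
have Hm1 : N m1 by apply: (nSdl Hn1 nS1 Em1).
have [k [Hk Ek]] : exists k, N k /\ v = (v * n1) * k.
  by apply/nP3; exists m1; split => //; rewrite Em1 lone_r.
rewrite -E1 in Ek; rewrite {1}Ek; apply/nP1; by exists k.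
Qed.

Lemma eqmodP u v : eqmod N u v <-> exists n, N n /\ u = n * v.
Proof.
split.
  move=> E; have : coset N u u by exists 1; rewrite lone_l; split => //; exact: nS1.
  by rewrite /eqmod in E; rewrite E => -[n [Hn ->]]; exists n.
move=> [n [Hn ->]]; apply: functional_extensionality => z.
apply: propositional_extensionality; split.
  exact: lemS.
case=> k [Hk ->]; have [n0 [Hn0 E]] := lemT v Hn.
apply: (@lemS n0 (n * v)) => //; exists k; split => //; by rewrite -E.
Qed.

Lemma wd_l a x x' : eqmod N x x' -> eqmod N (a * x) (a * x').
Proof.
move/eqmodP=> [n [Hn ->]]; apply/eqmodP.
have [n1 [Hn1 E1]] : exists n1, N n1 /\ n * x' = x' * n1 by apply/nP1; exists n.
rewrite E1.
have [n2 [Hn2 E2]] : exists n2, N n2 /\ a * (x' * n1) = (a * x') * n2 by apply/nP3; exists n1.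
rewrite E2; apply/nP1; by exists n2.
Qed.

Lemma wd_l' a y y' : eqmod N (a * y) (a * y') -> eqmod N y y'.
Proof.
move/eqmodP=> [n [Hn E]]; apply/eqmodP.
have [n1 [Hn1 E1]] : exists n1, N n1 /\ n * (a * y') = (a * y') * n1 by apply/nP1; exists n.
rewrite E1 in E.
have [n2 [Hn2 E2]] : exists n2, N n2 /\ (a * y') * n1 = a * (y' * n2) by apply/nP3; exists n1.
rewrite E2 in E; move/mulIl: E => ->; apply/nP1; by exists n2.
Qed.

End Normal.

Lemma inter_iff (P : (L -> Prop) -> Prop) (I : L -> Prop)
  (HI : forall z, I z <-> forall N, P N -> N z) (u v : L -> L) z :
  bijective u -> bijective v ->
  (forall N, P N -> ((exists m, N m /\ z = u m) <-> (exists m, N m /\ z = v m))) ->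
  ((exists m, I m /\ z = u m) <-> (exists m, I m /\ z = v m)).
Proof.
move=> bu bv H; split.
  move=> [m [Im Ez]]; have [m0 E] := bij_surj bv z.
  exists m0; split; last by rewrite E.
  apply/HI => N PN.
  have [m' [Nm' E']] : exists m', N m' /\ z = v m'.
    by apply: (proj1 (H N PN)); exists m; split => //; apply: (proj1 (HI m)).
  by rewrite -E in E'; move/(bij_inj bv): E' => ->.
move=> [m [Im Ez]]; have [m0 E] := bij_surj bu z.
exists m0; split; last by rewrite E.
apply/HI => N PN.
have [m' [Nm' E']] : exists m', N m' /\ z = u m'.
  by apply: (proj2 (H N PN)); exists m; split => //; apply: (proj1 (HI m)).
by rewrite -E in E'; move/(bij_inj bu): E' => ->.
Qed.

Lemma inter_normal (P : (L -> Prop) -> Prop) (I : L -> Prop)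
  (HI : forall z, I z <-> forall N, P N -> N z) :
  (forall N, P N -> normal_subloop N) -> normal_subloop I.
Proof.
move=> HP; split.
  split.
  - by apply/HI => N /HP /nS1.
  - move=> a b /HI Ha /HI Hb; apply/HI => N PN; apply: nSM; [exact: HP|exact: Ha|exact: Hb].
  - move=> a b y /HI Ha /HI Hb E; apply/HI => N PN.
    case: (HP N PN) => -[] _ _ H _ _; exact: H (Ha N PN) (Hb N PN) E.
  - move=> a b y /HI Ha /HI Hb E; apply/HI => N PN.
    case: (HP N PN) => -[] _ _ _ H _; exact: H (Ha N PN) (Hb N PN) E.
move=> x y z; split.
- apply: (inter_iff HI (u := lmul x) (v := fun m => m * x)).
  + exact: lmul_bij_l. + exact: lmul_bij_r.
  + move=> N /HP HN; exact: nP1.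
- apply: (inter_iff HI (u := fun m => (x * m) * y) (v := fun m => x * (m * y))).
  + exact: (bij_comp (lmul_bij_r y) (lmul_bij_l x)).
  + exact: (bij_comp (lmul_bij_l x) (lmul_bij_r y)).
  + move=> N /HP HN; exact: nP2.
- apply: (inter_iff HI (u := fun m => x * (y * m)) (v := fun m => (x * y) * m)).
  + exact: (bij_comp (lmul_bij_l x) (lmul_bij_l y)).
  + exact: lmul_bij_l.
  + move=> N /HP HN; exact: nP3.
Qed.

Lemma inter_witness (P : (L -> Prop) -> Prop) (I : L -> Prop)
  (HI : forall z, I z <-> forall N, P N -> N z) u v :
  (forall N, P N -> exists n, N n /\ u = n * v) -> exists n, I n /\ u = n * v.
Proof.
move=> H; have [n0 E] := surjr v u; exists n0; split => //.
apply/HI => N PN; have [n' [Nn' E']] := H N PN.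
by rewrite -E in E'; move/mulIr: E' => ->.
Qed.

Section Kernel.
Variable K : loop.
Variable h : L -> K.
Hypothesis hh : loop_hom h.

Lemma hom1 : h 1 = lone K.
Proof.
apply: (@mulIr K (h 1) (h 1) (lone K)); by rewrite /= -hh !lone_l.
Qed.

Lemma ker_iff (u v : L -> L) (U V : K -> K) z :
  (forall m, h (u m) = U (h m)) -> (forall m, h (v m) = V (h m)) ->
  U (lone K) = V (lone K) -> injective U -> injective V ->
  bijective u -> bijective v ->
  ((exists m, h m = lone K /\ z = u m) <-> (exists m, h m = lone K /\ z = v m)).
Proof.
move=> hu hv E1 iU iV bu bv; split.
  move=> [m [hm ->]]; have [m0 E] := bij_surj bv (u m); exists m0; split => //.
  apply: iV; rewrite -hv E hu hm; done.
move=> [m [hm ->]]; have [m0 E] := bij_surj bu (v m); exists m0; split => //.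
apply: iU; rewrite -hu E hv hm; done.
Qed.

Lemma ker_normal : normal_subloop (fun z => h z = lone K).
Proof.
split.
  split.
  - exact: hom1.
  - by move=> a b Ha Hb; rewrite hh Ha Hb lone_l.
  - move=> a b y Ha Hb E; apply: (@mulIl K (h a) (h y) (lone K)); by rewrite -hh E Ha Hb lone_r.
  - move=> a b y Ha Hb E; apply: (@mulIr K (h a) (h y) (lone K)); by rewrite /= -hh E Ha Hb lone_l.
move=> x y z; split.
- apply: (ker_iff (U := lmul (h x)) (V := fun m => lmul m (h x))).
  + by move=> m; rewrite hh. + by move=> m; rewrite hh.
  + by rewrite lone_l lone_r.
  + exact: mulIl. + exact: mulIr.
  + exact: lmul_bij_l. + exact: lmul_bij_r.
- apply: (ker_iff (U := fun m => lmul (lmul (h x) m) (h y)) (V := fun m => lmul (h x) (lmul m (h y)))).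
  + by move=> m; rewrite !hh. + by move=> m; rewrite !hh.
  + by rewrite lone_l lone_r.
  + exact: (bij_inj (bij_comp (lmul_bij_r (h y)) (lmul_bij_l (h x)))).
  + exact: (bij_inj (bij_comp (lmul_bij_l (h x)) (lmul_bij_r (h y)))).
  + exact: (bij_comp (lmul_bij_r y) (lmul_bij_l x)).
  + exact: (bij_comp (lmul_bij_l x) (lmul_bij_r y)).
- apply: (ker_iff (U := fun m => lmul (h x) (lmul (h y) m)) (V := fun m => lmul (lmul (h x) (h y)) m)).
  + by move=> m; rewrite !hh. + by move=> m; rewrite !hh.
  + by rewrite !lone_r.
  + exact: (bij_inj (bij_comp (lmul_bij_l (h x)) (lmul_bij_l (h y)))).
  + exact: mulIl.
  + exact: (bij_comp (lmul_bij_l x) (lmul_bij_l y)).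
  + exact: lmul_bij_l.
Qed.

Lemma ker_witness u v : h u = h v -> exists n, h n = lone K /\ u = n * v.
Proof.
move=> E; have [n0 E0] := surjr v u; exists n0; split => //.
apply: (@mulIr K (h v) (h n0) (lone K)); by rewrite /= -hh E0 E lone_l.
Qed.

End Kernel.
End LoopTheory.


Definition vec := nat -> bool.
Definition addv (a b : vec) : vec := fun i => a i (+) b i.
Definition zerov : vec := fun _ => false.

Lemma addvA a b c : addv a (addv b c) = addv (addv a b) c.
Proof. apply: functional_extensionality => i; rewrite /addv; by case: (a i); case: (b i); case: (c i). Qed.
Lemma addvC a b : addv a b = addv b a.
Proof. apply: functional_extensionality => i; rewrite /addv; by case: (a i); case: (b i). Qed.
Lemma addvv a : addv a a = zerov.
Proof. apply: functional_extensionality => i; rewrite /addv; by case: (a i). Qed.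
Lemma add0v a : addv zerov a = a.
Proof. by apply: functional_extensionality => i. Qed.
Lemma addv0 a : addv a zerov = a.
Proof. apply: functional_extensionality => i; by rewrite /addv addbF. Qed.
Lemma addvK a b : addv (addv a b) b = a.
Proof. by rewrite -addvA addvv addv0. Qed.
Lemma addKv a b : addv a (addv a b) = b.
Proof. by rewrite addvA addvv add0v. Qed.

Lemma vbij a : bijective (addv a).
Proof. by exists (addv a) => b; rewrite addKv. Qed.
Lemma vbij_r a : bijective (fun b => addv b a).
Proof. by exists (fun b => addv b a) => b; rewrite addvK. Qed.

Definition Aloop : loop := @Loop vec addv zerov add0v addv0 vbij vbij_r.

Section Q.
Variable m : nat.
Definition fQ (a b : vec) : bool := a 0 && all b (iota 1 m.+1).
Definition mulQ (p q : vec * bool) : vec * bool :=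
  (addv p.1 q.1, p.2 (+) q.2 (+) fQ p.1 q.1).
Definition oneQ : vec * bool := (zerov, false).
Definition ldivQ (p q : vec * bool) : vec * bool :=
  (addv p.1 q.1, p.2 (+) q.2 (+) fQ p.1 (addv p.1 q.1)).
Definition rdivQ (p q : vec * bool) : vec * bool :=
  (addv q.1 p.1, p.2 (+) q.2 (+) fQ (addv q.1 p.1) p.1).

Lemma fQ0l b : fQ zerov b = false. Proof. by []. Qed.
Lemma fQ0r a : fQ a zerov = false. Proof. by rewrite /fQ /= andbF. Qed.

Lemma mulQ1 p : mulQ oneQ p = p.
Proof. case: p => a z; by rewrite /mulQ /= add0v addbF. Qed.
Lemma mulQ1r p : mulQ p oneQ = p.
Proof. case: p => a z; by rewrite /mulQ /= addv0 fQ0r !addbF. Qed.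
Lemma ldivQK p : cancel (mulQ p) (ldivQ p).
Proof.
case: p => a z [b w]; rewrite /mulQ /ldivQ /= addKv.
by congr pair; case: z; case: w; case: (fQ a b).
Qed.
Lemma mulQK p : cancel (ldivQ p) (mulQ p).
Proof.
case: p => a z [b w]; rewrite /mulQ /ldivQ /= addKv.
by congr pair; case: z; case: w; case: (fQ a (addv a b)).
Qed.
Lemma qbij_l p : bijective (mulQ p).
Proof. exists (ldivQ p); [exact: ldivQK | exact: mulQK]. Qed.
Lemma qbij_r p : bijective (fun q => mulQ q p).
Proof.
exists (rdivQ p) => -[a z]; case: p => b w; rewrite /mulQ /rdivQ /= addvK;
  by congr pair; case: z; case: w; case: (fQ a b); case: (fQ (addv a b) b).
Qed.

Definition Qloop : loop := @Loop (vec * bool) mulQ oneQ mulQ1 mulQ1r qbij_l qbij_r.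

Section Center.
Variable z : bool.
Let p := (zerov, z).
Lemma cQ1 q : mulQ p q = mulQ q p.
Proof. case: q => b w; rewrite /mulQ /= fQ0l fQ0r add0v addv0; by congr pair; case: z; case: w. Qed.
Lemma cQ2 q r : mulQ (mulQ p q) r = mulQ p (mulQ q r).
Proof.
case: q r => b w [c u]; rewrite /mulQ /= !fQ0l !add0v.
by congr pair; case: z; case: w; case: u; case: (fQ b c).
Qed.
Lemma cQ3 q r : mulQ (mulQ q p) r = mulQ q (mulQ p r).
Proof.
case: q r => b w [c u]; rewrite /mulQ /= !fQ0l fQ0r !add0v addv0.
by congr pair; case: z; case: w; case: u; case: (fQ b c).
Qed.
Lemma cQ4 q r : mulQ (mulQ q r) p = mulQ q (mulQ r p).
Proof.
case: q r => b w [c u]; rewrite /mulQ /= !fQ0r !addv0.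
by congr pair; case: z; case: w; case: u; case: (fQ b c).
Qed.
End Center.
End Q.


Fixpoint iterc (X : Type) (l li : nat -> X -> X) (c1 c1i : X -> X) (k : nat) : (X -> X) * (X -> X) :=
  match k with
  | 0 => (c1, c1i)
  | k'.+1 => let p := iterc l li c1 c1i k' in
      (li k \o p.2 \o l k \o p.1, p.2 \o li k \o p.1 \o l k)
  end.

Lemma iterc_gamma (X : Type) (G : (X -> X) -> Prop) (l li : nat -> X -> X) :
  (forall j, G (l j)) -> (forall j, cancel (l j) (li j)) -> (forall j, cancel (li j) (l j)) ->
  forall k, [/\ gamma G k.+1 (iterc l li (l 0) (li 0) k).1,
     cancel (iterc l li (l 0) (li 0) k).1 (iterc l li (l 0) (li 0) k).2 &
     cancel (iterc l li (l 0) (li 0) k).2 (iterc l li (l 0) (li 0) k).1].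
Proof.
move=> HG c1 c2; elim=> [|k [IH1 IH2 IH3]] /=; first by split.
split.
- apply: gen_base; exists (l k.+1), (iterc l li (l 0) (li 0) k).1, (li k.+1), (iterc l li (l 0) (li 0) k).2.
  by do !split.
- by move=> y /=; do 4 rewrite ?c1 ?c2 ?IH2 ?IH3.
- by move=> y /=; do 4 rewrite ?c1 ?c2 ?IH2 ?IH3.
Qed.

Lemma iterc_transfer (X Y : Type) (H : X -> Y) (l li : nat -> X -> X) (l' li' : nat -> Y -> Y) K :
  (forall j P, j <= K -> H (l j P) = l' j (H P)) -> (forall j P, j <= K -> H (li j P) = li' j (H P)) ->
  forall k, k <= K -> forall P, H ((iterc l li (l 0) (li 0) k).1 P) = (iterc l' li' (l' 0) (li' 0) k).1 (H P) /\
              H ((iterc l li (l 0) (li 0) k).2 P) = (iterc l' li' (l' 0) (li' 0) k).2 (H P).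
Proof.
move=> h1 h2; elim=> [|k IH] Hk P /=; first by rewrite h1 ?h2.
have Hk' : k <= K by apply: ltnW.
by rewrite h2 // (proj2 (IH Hk' _)) h1 // (proj1 (IH Hk' _)) (proj2 (IH Hk' _)) h2 // (proj1 (IH Hk' _)) h1.
Qed.

Section QCalc.
Variable m : nat.
Definition ev (j : nat) : vec := fun i => i == j.
Definition phi k (b : vec) := all b (iota k.+1 (m.+1 - k)).
Definition tv k := if k is 0 then ev 0 else zerov.
Definition lQ j := mulQ m (ev j, false).
Definition liQ j := ldivQ m (ev j, false).

Lemma lQS j b w : lQ j.+1 (b, w) = (addv (ev j.+1) b, w).
Proof. by rewrite /lQ /mulQ /= /fQ /= addbF. Qed.
Lemma liQS j b w : liQ j.+1 (b, w) = (addv (ev j.+1) b, w).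
Proof. by rewrite /liQ /ldivQ /= /fQ /= addbF. Qed.

Lemma phiS k b : k < m -> phi k b (+) phi k (addv (ev k.+1) b) = phi k.+1 b.
Proof.
move=> Hk; rewrite /phi subSS (subSn (ltnW Hk)).
rewrite /= /addv /ev eqxx.
have -> : all (fun i => (i == k.+1) (+) b i) (iota k.+2 (m - k)) = all b (iota k.+2 (m - k)).
  apply: eq_in_all => i; rewrite mem_iota => /andP [Hi _].
  have -> : (i == k.+1) = false by apply/negbTE; rewrite neq_ltn Hi orbT.
  by [].
by case: (b k.+1); case: (all b _).
Qed.

Lemma iterQ k : k <= m -> forall b w,
  (iterc lQ liQ (lQ 0) (liQ 0) k).1 (b, w) = (addv b (tv k), w (+) phi k b) /\
  (iterc lQ liQ (lQ 0) (liQ 0) k).2 (b, w) = (addv b (tv k), w (+) phi k (addv b (tv k))).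
Proof.
elim: k => [|k IH] Hk b w /=.
  by rewrite /lQ /liQ /mulQ /ldivQ /= /fQ /phi /= addvC.
have Hk' : k <= m by apply: ltnW.
have Hlt : k < m by [].
split.
- rewrite (proj1 (IH Hk' _ _)) lQS (proj2 (IH Hk' _ _)) liQS.
  have -> : addv (addv (ev k.+1) (addv b (tv k))) (tv k) = addv (ev k.+1) b by rewrite addvA addvK.
  rewrite addKv addv0; congr pair.
  by rewrite -addbA phiS.
- rewrite lQS (proj1 (IH Hk' _ _)) liQS (proj2 (IH Hk' _ _)).
  have -> : addv (addv (ev k.+1) (addv (addv (ev k.+1) b) (tv k))) (tv k) = b by rewrite addvA addKv addvK.
  rewrite addv0; congr pair.
  by rewrite -addbA [X in w (+) X]addbC phiS.
Qed.
End QCalc.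


Theorem lemma4p2 (n : nat) (Hn : 2 <= n) (F : loop) (x : 'I_n -> F)
  (Hfree : free_loop_on x) :
  exists g, gamma (@LMlt_quot F (@bruck F 3)) (n - 1) g /\ exists q, g q <> q.
Proof.
case: n Hn x Hfree => [|[|m]] // _ x Hfree.
have [h [hh hx _]] := Hfree (Qloop m) (fun i => (ev i, false)).
pose g0 (z : F) : Aloop := (h z).1.
have hg0 : loop_hom g0 by move=> a b; rewrite /g0 hh.
pose K := fun z => g0 z = lone Aloop.
have normK : normal_subloop K := ker_normal hg0.
have centK : central_mod K (@bruck F 1).
  move=> a y z _; split; apply/(eqmodP normK); apply: (ker_witness hg0); rewrite !hg0 /=.
  - exact: addvC.
  - by rewrite addvA.
  - by rewrite addvA.
  - by rewrite addvA.
have F2K : forall a, @bruck F 2 a -> (h a).1 = zerov.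
  move=> a Ha; exact: (Ha K normK (fun _ _ => I) centK).
have Hc : forall a, @bruck F 2 a -> forall y z,
  [/\ h (lmul a y) = h (lmul y a), h (lmul (lmul a y) z) = h (lmul a (lmul y z)),
      h (lmul (lmul y a) z) = h (lmul y (lmul a z)) & h (lmul (lmul y z) a) = h (lmul y (lmul z a))].
  move=> a Ha y z; have Ea : h a = (zerov, (h a).2) by rewrite -(F2K a Ha); case: (h a).
  rewrite !hh Ea; split.
  - exact: cQ1. - exact: cQ2. - exact: cQ3. - exact: cQ4.
pose kk := fun z => h z = lone (Qloop m).
have normk : normal_subloop kk := ker_normal hh.
pose P := fun N : F -> Prop => N = kk \/ (normal_subloop N /\ central_mod N (@bruck F 1)).
pose M := fun z => forall N, P N -> N z.
have HI : forall z, M z <-> forall N, P N -> N z by [].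
have normM : normal_subloop M.
  apply: (inter_normal HI) => N [->|[]] //.
have centM : central_mod M (@bruck F 2).
  move=> a y z Ha; have [E1 E2 E3 E4] := Hc a Ha y z.
  split; apply/(eqmodP normM); apply: (inter_witness HI) => N [->|[HN HC]];
    try (apply: (ker_witness hh); done);
    case: (HC a y z I) => C1 C2 C3 C4; by apply/(eqmodP HN).
have F3k : forall z, @bruck F 3 z -> h z = lone (Qloop m).
  move=> z Hz; have HM : M z.
    apply: (Hz M normM _ centM) => y My N HN _ HC; apply: My; by right.
  exact: (HM kk (or_introl erefl)).
pose N3 := @bruck F 3.
have normF3 : normal_subloop N3.
  pose P3 := fun N : F -> Prop => normal_subloop N /\ (forall y, N y -> @bruck F 2 y) /\ central_mod N (@bruck F 2).
  apply: (@inter_normal F P3) => [z|N [] //].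
  split => [Hz N [a [b c]]|H0 N a b c]; [exact: Hz N a b c | exact: H0 N (conj a (conj b c))].
have eqF3 : forall u v, eqmod N3 u v -> h u = h v.
  move=> u v /(eqmodP normF3) [n0 [Hn0 ->]]; by rewrite hh (F3k _ Hn0) lone_l.
pose rep (Pq : quot N3) : F := proj1_sig (constructive_indefinite_description _ (proj2_sig Pq)).
have rep_spec : forall Pq, proj1_sig Pq = coset N3 (rep Pq).
  move=> Pq; exact: (proj2_sig (constructive_indefinite_description _ (proj2_sig Pq))).
have qeq : forall P1 P2 : quot N3, proj1_sig P1 = proj1_sig P2 -> P1 = P2.
  move=> [S1 p1] [S2 p2] /= E; subst S2; congr exist; exact: proof_irrelevance.
have rep_qproj : forall d, eqmod N3 (rep (qproj N3 d)) d.
  by move=> d; rewrite /eqmod -(rep_spec (qproj N3 d)).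
pose ldivF (a z : F) : F := proj1_sig (constructive_indefinite_description _ (surjl a z)).
have ldivF_spec : forall a z, lmul a (ldivF a z) = z.
  move=> a z; exact: (proj2_sig (constructive_indefinite_description _ (surjl a z))).
pose lq (a : F) (Pq : quot N3) := qproj N3 (lmul a (rep Pq)).
pose lqi (a : F) (Pq : quot N3) := qproj N3 (ldivF a (rep Pq)).
have lq_lmult : forall a, quot_lmult (lq a).
  move=> a; exists a => y; apply: qeq => /=; exact: (wd_l normF3 a (rep_qproj y)).
have lqK : forall a, cancel (lq a) (lqi a).
  move=> a Pq; apply: qeq; rewrite [RHS](rep_spec Pq) /=.
  apply: (wd_l' normF3 (a := a)); rewrite ldivF_spec; exact: rep_qproj.
have lqiK : forall a, cancel (lqi a) (lq a).
  move=> a Pq; apply: qeq; rewrite [RHS](rep_spec Pq) /=.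
  have := wd_l normF3 a (rep_qproj (ldivF a (rep Pq))); rewrite /eqmod => ->.
  by rewrite ldivF_spec.
pose H (Pq : quot N3) : Qloop m := h (rep Pq).
have H_qproj : forall d, H (qproj N3 d) = h d by move=> d; exact: eqF3 (rep_qproj d).
have H_lq : forall a Pq, H (lq a Pq) = mulQ m (h a) (H Pq).
  by move=> a Pq; rewrite /lq H_qproj hh.
have H_lqi : forall a Pq, H (lqi a Pq) = ldivQ m (h a) (H Pq).
  move=> a Pq; rewrite /lqi H_qproj /H.
  have -> : h (rep Pq) = lmul (h a) (h (ldivF a (rep Pq))) by rewrite -hh ldivF_spec.
  symmetry; exact: (ldivQK m (h a) _).
pose l j := lq (x (inord j)).
pose li j := lqi (x (inord j)).
have hxj : forall j, j <= m.+1 -> h (x (inord j)) = (ev j, false).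
  by move=> j Hj; rewrite hx inordK.
have Htr := @iterc_transfer _ _ H l li (lQ m) (liQ m) m.
have [G1 _ _] := @iterc_gamma _ (@LMlt_quot F N3) l li (fun j => gen_base (lq_lmult _))
   (fun j => lqK _) (fun j => lqiK _) m.
exists (iterc l li (l 0) (li 0) m).1; split.
  by rewrite subSS subn0.
exists (qproj N3 (x (inord m.+1))) => E.
have := f_equal H E.
rewrite (proj1 (Htr _ _ m (leqnn m) _)); last first.
- by move=> j Pq Hj; rewrite /li H_lqi hxj // ltnW.
- by move=> j Pq Hj; rewrite /l H_lq hxj // ltnW.
rewrite H_qproj hxj // (proj1 (iterQ (leqnn m) _ _)) => -[_].
by rewrite /phi subSnn /= /ev eqxx.
Qed.
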